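(* Let $R$ be a commutative Noetherian local ring and let $M,N$ be finitely generated $R$-modules. Suppose $M$ is strongly self dual with respect to $N$. Then $\operatorname{End}_R(M)$ admits an $R^*$-algebra structure such that $M_* \cong \operatorname{Hom}_R(M,N)$ as right $\operatorname{End}_R(M)$-modules, where $\operatorname{Hom}_R(M,N)$ is a right $\operatorname{End}_R(M)$-module via precomposition ($g\cdot f = g\circ f$).
   Context: An $R$-algebra $E$ (possibly noncommutative) is an $R^*$-algebra if there is a map of abelian groups $(-)^*:E\to E$ with $(ab)^*=b^*a^*$, $1_E^*=1_E$, $(ra)^*=ra^*$ for $r\in R$, and $a^{**}=a$ for all $a,b\in E$. If $E$ is an $R^*$-algebra and $M$ is a left $E$-module, $M_*$ denotes $M$ regarded as a right $E$-module via $x\cdot f = f^*x$. $M$ is a left module over $\operatorname{End}_R(M)$ via $f\cdot x=f(x)$. An $R$-module $M$ is strongly self dual with respect to an $R$-module $N$ if there is an $R$-module isomorphism $\alpha:M\to\operatorname{Hom}_R(M,N)$ with $\alpha(x)(y)=\alpha(y)(x)$ for all $x,y\in M$. *)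

(* Defs.v *)
From HB Require Import structures.
From mathcomp Require Import all_boot all_order all_algebra.
Set Implicit Arguments.
Unset Strict Implicit.
Unset Printing Implicit Defensive.
Import GRing.Theory.
Local Open Scope ring_scope.

Definition is_ideal (R : comNzRingType) (I : R -> Prop) : Prop :=
  [/\ I 0, (forall x y, I x -> I y -> I (x + y)) & (forall r x, I x -> I (r * x))].

Definition ideal_fg (R : comNzRingType) (I : R -> Prop) : Prop :=
  exists s : seq R, forall x : R,
    I x <-> exists c : 'I_(size s) -> R, x = \sum_(i < size s) c i * s`_i.

Definition noetherian_ring (R : comNzRingType) : Prop :=
  forall I : R -> Prop, is_ideal I -> ideal_fg I.

Definition maximal_ideal (R : comNzRingType) (m : R -> Prop) : Prop :=
  [/\ is_ideal m, ~ m 1 &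
      forall J : R -> Prop, is_ideal J -> ~ J 1 ->
        (forall x, m x -> J x) -> forall x, J x -> m x].

Definition local_ring (R : comNzRingType) : Prop :=
  exists m : R -> Prop, maximal_ideal m /\
    forall m' : R -> Prop, maximal_ideal m' -> forall x, m' x <-> m x.

Definition module_fg (R : comNzRingType) (M : lmodType R) : Prop :=
  exists s : seq M, forall x : M,
    exists c : 'I_(size s) -> R, x = \sum_(i < size s) c i *: s`_i.

Definition R_linear (R : comNzRingType) (M N : lmodType R) (f : M -> N) : Prop :=
  forall (a : R) (x y : M), f (a *: x + y) = a *: f x + f y.

(* M is strongly self dual w.r.t. N: an R-isomorphism alpha : M -> Hom_R(M,N)
   with alpha(x)(y) = alpha(y)(x). *)
Definition strongly_self_dual (R : comNzRingType) (M N : lmodType R) : Prop :=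
  exists alpha : M -> M -> N,
    [/\ (forall x, R_linear (alpha x)),
        (forall (a : R) (x y z : M), alpha (a *: x + y) z = a *: alpha x z + alpha y z),
        (forall x y, (forall z, alpha x z = alpha y z) -> x = y),
        (forall g : M -> N, R_linear g -> exists x, forall z, alpha x z = g z) &
        (forall x y, alpha x y = alpha y x)].

(* An R^*-algebra structure on End_R(M) (elements: R-linear maps M -> M,
   product = composition, unit = identity, R acting by (r f)(x) = r f(x)),
   given by an involution star. *)
Definition Rstar_End (R : comNzRingType) (M : lmodType R)
    (star : (M -> M) -> (M -> M)) : Prop :=
  [/\ (forall f, R_linear f -> R_linear (star f)),
      (forall f g, R_linear f -> R_linear g ->
         star (fun x => f x + g x) = (fun x => star f x + star g x)),
      (forall f g, R_linear f -> R_linear g -> star (f \o g) = star g \o star f),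
      star id = id &
      (forall (r : R) f, R_linear f -> star (fun x => r *: f x) = (fun x => r *: star f x))]
  /\ (forall f, R_linear f -> star (star f) = f).

(* phi : M_* -> Hom_R(M,N) is an isomorphism of right End_R(M)-modules, where
   M_* has action x . f = star f x and Hom_R(M,N) has action g . f = g \o f. *)
Definition right_End_iso (R : comNzRingType) (M N : lmodType R)
    (star : (M -> M) -> (M -> M)) (phi : M -> M -> N) : Prop :=
  [/\ (forall x, R_linear (phi x)),
      (forall x y z, phi (x + y) z = phi x z + phi y z),
      (forall x y, (forall z, phi x z = phi y z) -> x = y),
      (forall g : M -> N, R_linear g -> exists x, forall z, phi x z = g z) &
      (forall f, R_linear f -> forall x z, phi (star f x) z = phi x (f z))].

(* Main.v *)
Require Import Defs.
From mathcomp Require Import all_boot all_order all_algebra.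
From Stdlib Require Import ClassicalEpsilon FunctionalExtensionality.
Set Implicit Arguments.
Import GRing.Theory.
Local Open Scope ring_scope.

Lemma lin0 (R : comNzRingType) (M N : lmodType R) (f : M -> N) :
  R_linear f -> f 0 = 0.
Proof.
move=> H; have := H 1 0 0; rewrite !scale1r addr0 => E.
by apply: (@addrI _ (f 0)); rewrite addr0 -E.
Qed.

Lemma linD (R : comNzRingType) (M N : lmodType R) (f : M -> N) :
  R_linear f -> forall x y, f (x + y) = f x + f y.
Proof. by move=> H x y; have := H 1 x y; rewrite !scale1r. Qed.

Lemma linZ (R : comNzRingType) (M N : lmodType R) (f : M -> N) :
  R_linear f -> forall a x, f (a *: x) = a *: f x.
Proof. by move=> H a x; have := H a x 0; rewrite !addr0 lin0 // addr0. Qed.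

Theorem proposition2p5 (R : comNzRingType) (M N : lmodType R) :
  noetherian_ring R -> local_ring R -> module_fg M -> module_fg N ->
  strongly_self_dual M N ->
  exists star : (M -> M) -> (M -> M),
    Rstar_End star /\ exists phi : M -> M -> N, right_End_iso star phi.
Proof.
move=> _ _ _ _ [alpha [Hl Hlin Hinj Hsurj Hsym]].
have aD : forall x y z, alpha (x + y) z = alpha x z + alpha y z.
  by move=> x y z; have := Hlin 1 x y z; rewrite !scale1r.
have a0 : forall z, alpha 0 z = 0.
  move=> z; have := aD 0 0 z; rewrite addr0 => E.
  by apply: (@addrI _ (alpha 0 z)); rewrite addr0 -E.
have aZ : forall a x z, alpha (a *: x) z = a *: alpha x z.
  by move=> a x z; have := Hlin a x 0 z; rewrite !addr0 a0 addr0.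
pose star (f : M -> M) (x : M) :=
  epsilon (inhabits (0 : M)) (fun y => forall z, alpha y z = alpha x (f z)).
have starP : forall f, R_linear f -> forall x z, alpha (star f x) z = alpha x (f z).
  move=> f Hf x.
  have [y Hy] : exists y, forall z, alpha y z = alpha x (f z).
    apply: Hsurj => a u v; rewrite Hf.
    by rewrite (linD (Hl x)) (linZ (Hl x)).
  exact: (epsilon_spec (inhabits (0 : M)) (fun y => forall z, alpha y z = alpha x (f z)) (ex_intro _ y Hy)).
clearbody star.
have idL : R_linear (@id M) by [].
exists star; split; first (rewrite /Rstar_End; split; first split).
- move=> f Hf a x y; apply: (Hinj) => z.
  by rewrite starP // !Hlin !starP.
- move=> f g Hf Hg; apply: functional_extensionality => x; apply: (Hinj) => z.
  have Hfg : R_linear (fun x => f x + g x).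
    by move=> a u v; rewrite Hf Hg scalerDr addrACA.
  by rewrite starP // aD !starP // (linD (Hl x)).
- move=> f g Hf Hg; apply: functional_extensionality => x; apply: (Hinj) => z.
  have Hfg : R_linear (f \o g) by move=> a u v /=; rewrite Hg Hf.
  by rewrite starP //= !starP.
- apply: functional_extensionality => x; apply: (Hinj) => z; by rewrite starP.
- move=> r f Hf; apply: functional_extensionality => x; apply: (Hinj) => z.
  have Hrf : R_linear (fun x => r *: f x).
    by move=> a u v; rewrite Hf scalerDr !scalerA mulrC.
  by rewrite starP // aZ starP // (linZ (Hl x)).
- move=> f Hf; apply: functional_extensionality => x; apply: (Hinj) => z.
  have Hsf : R_linear (star f).
    move=> a u v; apply: (Hinj) => w.
    by rewrite starP // !Hlin !starP.
  by rewrite starP // Hsym starP // Hsym.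
- by exists alpha; split => // f Hf x z; rewrite starP.
Qed.
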